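(* Let $(V,w,\mu)$ be a simple weighted graph and let $\mathcal V:V\to[0,\infty)$. Then \[\mathcal F^{\mathcal V}=\mathcal F\cap L^2(V,\mathcal V\cdot\mu).\]
   Context: A simple weighted graph $(V,w,\mu)$ consists of a countably infinite set $V$, a symmetric function $w:V\times V\to[0,\infty)$ and a function $\mu:V\to(0,\infty)$. The graph with edges $\{x\sim y:w(x,y)>0\}$ is assumed to be locally finite, connected, and without loops or multiple edges. $C_c(V)$ denotes the finitely supported functions. For a potential $\mathcal V\ge0$, define on $C_c(V)$ \[\mathcal E^{\mathcal V}(u,u)=\frac12\sum_{x,y\in V}w(x,y)(u(x)-u(y))^2+\sum_{x}\mathcal V(x)u(x)^2\mu(x).\] Let $\mathcal F^{\mathcal V}$ be the closure of $C_c(V)$ with respect to the norm $\big(\mathcal E^{\mathcal V}(u,u)+\|u\|^2_{L^2(V,\mu)}\big)^{1/2}$, taken inside the space of $u\in L^2(V,\mu)$ for which that expression is finite. Set $\mathcal F=\mathcal F^{0}$. The measure $\mathcal V\cdot\mu$ is given by $x\mapsto\mathcal V(x)\mu(x)$. *)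

(* Defs.v *)
From HB Require Import structures.
From mathcomp Require Import all_boot all_order all_algebra.
From mathcomp Require Import all_classical all_reals.
From mathcomp Require Import ereal topology normedtype sequences esum.
From Stdlib Require Import Relations.
Set Implicit Arguments. Unset Strict Implicit. Unset Printing Implicit Defensive.
Import Order.TTheory GRing.Theory Num.Theory.
Local Open Scope classical_set_scope.
Local Open Scope ring_scope.

Section Graphs.
Context {R : realType} {V : countType}.

Definition simple_weighted_graph (w : V -> V -> R) (mu : V -> R) : Prop :=
  infinite_set [set: V] /\
  (forall x y, w x y = w y x) /\
  (forall x y, 0 <= w x y) /\
  (forall x, 0 < mu x) /\
  (forall x, finite_set [set y | 0 < w x y]) /\
  (forall x y, clos_refl_trans V (fun a b => 0 < w a b) x y) /\
  (forall x, w x x = 0).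

Definition Cc (u : V -> R) : Prop := finite_set [set x | u x != 0].

Definition energy (w : V -> V -> R) (mu Pot : V -> R) (u : V -> R) : \bar R :=
  ((2%:R^-1)%:E * \esum_(p in [set: V * V])
       (w p.1 p.2 * (u p.1 - u p.2) ^+ 2)%:E
   + \esum_(x in [set: V]) (Pot x * u x ^+ 2 * mu x)%:E)%E.

Definition L2norm2 (m : V -> R) (u : V -> R) : \bar R :=
  \esum_(x in [set: V]) (u x ^+ 2 * m x)%:E.

Definition in_L2 (m : V -> R) (u : V -> R) : Prop := (L2norm2 m u < +oo)%E.

Definition form_norm2 (w : V -> V -> R) (mu Pot : V -> R) (u : V -> R) : \bar R :=
  (energy w mu Pot u + L2norm2 mu u)%E.

(* F^Pot: closure of C_c(V) w.r.t. the form norm, inside the space of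
   u in L^2(V,mu) with finite form norm (closure = sequential closure
   in this normed space). *)
Definition formF (w : V -> V -> R) (mu Pot : V -> R) (u : V -> R) : Prop :=
  in_L2 mu u /\ (energy w mu Pot u < +oo)%E /\
  exists phi : nat -> V -> R, (forall n, Cc (phi n)) /\
    (fun n => form_norm2 w mu Pot (u \- phi n)) @ \oo --> (0%R)%:E.

End Graphs.

(* Main.v *)
Require Import Defs.
From HB Require Import structures.
From mathcomp Require Import all_boot all_order all_algebra.
From mathcomp Require Import all_classical all_reals.
From mathcomp Require Import ereal topology normedtype sequences esum.
From mathcomp Require Import finmap ring lra.
Import Order.TTheory GRing.Theory Num.Theory.
Import numFieldNormedType.Exports.
Local Open Scope classical_set_scope.
Local Open Scope ring_scope.
Set Implicit Arguments. Unset Strict Implicit. Unset Printing Implicit Defensive.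

Section Aux.
Context {R : realType}.
Local Open Scope ereal_scope.

Lemma esumZ (T : choiceType) (S : set T) (k : R) (a : T -> \bar R) :
  (0 <= k)%R -> (forall x, 0 <= a x) ->
  \esum_(i in S) (k%:E * a i) = k%:E * \esum_(i in S) a i.
Proof.
move=> k0 a0; rewrite /esum -ereal_supZl//; last first.
  by apply/set0P; exists (\sum_(x \in set0) a x); exists set0 => //; exact: fsets_set0.
congr ereal_sup; apply/seteqP; split => x /=.
- move=> [A [fA AS] <-]; exists (\sum_(x \in A) a x); first by exists A.
  by rewrite !fsbig_finite// ge0_sume_distrr.
- move=> [y [A [fA AS] <-] <-]; exists A => //.
  by rewrite !fsbig_finite// ge0_sume_distrr.
Qed.
End Aux.
Section Aux.
Context {R : realType}.
Local Open Scope ereal_scope.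

Lemma esum_tail (T : choiceType) (f : T -> R) (P tau : R) :
  (forall x, 0 <= f x)%R -> \esum_(i in [set: T]) (f i)%:E = P%:E -> (0 < tau)%R ->
  exists2 F : set T, finite_set F & \esum_(i in ~` F) (f i)%:E <= tau%:E.
Proof.
move=> f0 hP tau0.
have : (P - tau)%:E < \esum_(i in [set: T]) (f i)%:E by rewrite hP lte_fin gtrBl.
move=> /ereal_sup_gt [_ [X [finX _] <-] hX].
exists X => //.
have := esumID X [set: T] (fun i => (f i)%:E) (fun i _ => f0 i).
rewrite setTI hP.
have h0 : 0 <= \esum_(i in X) (f i)%:E by apply: esum_ge0 => x _; rewrite lee_fin.
have t0 : 0 <= \esum_(i in [set: T] `&` ~` X) (f i)%:E by apply: esum_ge0 => x _; rewrite lee_fin.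
have hge : \sum_(x \in X) (f x)%:E <= \esum_(i in X) (f i)%:E.
  by apply: esum_ge; exists X => //; exact: fsets_self.
rewrite setTI in t0 *.
move: h0 t0 hge.
case: (\esum_(i in X) (f i)%:E) => [h||]; case: (\esum_(i in ~` X) (f i)%:E) => [t||] //=.
move=> h0 t0 hge [] ht.
rewrite lee_fin.
have := lt_le_trans hX hge; rewrite lte_fin => hh.
lra.
Qed.

End Aux.
Section Aux3.
Context {R : realType}.
Local Open Scope ereal_scope.
Lemma esum4 (T : choiceType) (S : set T) (k1 k2 k3 k4 : R) (f1 f2 f3 f4 : T -> R) :
  (0 <= k1)%R -> (0 <= k2)%R -> (0 <= k3)%R -> (0 <= k4)%R ->
  (forall x, 0 <= f1 x)%R -> (forall x, 0 <= f2 x)%R ->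
  (forall x, 0 <= f3 x)%R -> (forall x, 0 <= f4 x)%R ->
  \esum_(i in S) ((k1 * f1 i + k2 * f2 i + k3 * f3 i + k4 * f4 i)%R)%:E =
  k1%:E * (\esum_(i in S) (f1 i)%:E) + k2%:E * (\esum_(i in S) (f2 i)%:E) +
  k3%:E * (\esum_(i in S) (f3 i)%:E) + k4%:E * (\esum_(i in S) (f4 i)%:E).
Proof.
move=> k10 k20 k30 k40 f10 f20 f30 f40.
have g : forall (k : R) (f : T -> R), (0 <= k)%R -> (forall x, 0 <= f x)%R ->
    forall x, 0 <= (k * f x)%:E.
  by move=> k f k0 f0 x; rewrite lee_fin mulr_ge0.
rewrite (@eq_esum _ _ _ _ (fun i => (k1 * f1 i)%:E + (k2 * f2 i)%:E + (k3 * f3 i)%:E + (k4 * f4 i)%:E)); last first.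
  by move=> i _; rewrite !EFinD.
rewrite esumD; last 2 first.
- by move=> i _; rewrite !adde_ge0 // g.
- by move=> i _; rewrite g.
rewrite esumD; last 2 first.
- by move=> i _; rewrite !adde_ge0 // g.
- by move=> i _; rewrite g.
rewrite esumD; last 2 first.
- by move=> i _; rewrite g.
- by move=> i _; rewrite g.
have z : forall (k : R) (f : T -> R), (0 <= k)%R -> (forall x, 0 <= f x)%R ->
    \esum_(i in S) (k * f i)%:E = k%:E * \esum_(i in S) (f i)%:E.
  move=> k f k0 f0; rewrite -esumZ //; try by move=> x; rewrite lee_fin.
by rewrite !z.
Qed.
End Aux3.
Ltac nz := apply/negP => /eqP; lra.
Section Aux.
Context {R : realType}.

Lemma cvg_sum0 (I : Type) (s : seq I) (g : nat -> I -> R) :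
  (forall i, (fun n => g n i) @ \oo --> (0:R)) ->
  (fun n => \sum_(i <- s) g n i) @ \oo --> (0:R).
Proof.
move=> hg; elim: s => [|i s IH].
  under eq_fun do rewrite big_nil. exact: cvg_cst.
have -> : (fun n => \sum_(j <- i :: s) g n j) = (fun n => g n i + \sum_(j <- s) g n j).
  by apply/funext => n; rewrite big_cons.
have := cvgD (hg i) IH; rewrite addr0; exact.
Qed.

Lemma core_ineq (x y eta : R) : 0 < eta ->
  (x + y) ^+ 2 <= (1 + eta) * x ^+ 2 + (1 + eta^-1) * y ^+ 2.
Proof.
move=> e0.
have e : (1 + eta) * x ^+ 2 + (1 + eta^-1) * y ^+ 2 - (x + y) ^+ 2
   = eta^-1 * (eta * x - y) ^+ 2.
  by field; rewrite gt_eqF.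
rewrite -subr_ge0 e mulr_ge0 ?sqr_ge0 // invr_ge0 ltW //.
Qed.

Local Open Scope ereal_scope.
Lemma fin_bounds (x : \bar R) (r : R) : 0 <= x -> x <= r%:E -> x = (fine x)%:E.
Proof. by case: x. Qed.
End Aux.
Section LemA.
Context {R : realType} {I : choiceType} (c : I -> R) (c0 : forall i, 0 <= c i).

Definition Sq (p : I -> R) : \bar R := \esum_(i in [set: I]) (c i * p i ^+ 2)%:E.

Lemma Sq_ge0 p : (0 <= Sq p)%E.
Proof. by apply: esum_ge0 => i _; rewrite lee_fin mulr_ge0 ?sqr_ge0. Qed.

Lemma term_le_Sq p x : ((c x * p x ^+ 2)%:E <= Sq p)%E.
Proof.
apply: esum_ge; exists [set x]; first by split => //; exact: finite_set1.
by rewrite fsbig_set1.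
Qed.

Lemma Sq_le1 p p1 k : 0 <= k ->
  (forall i, c i * p i ^+ 2 <= k * (c i * p1 i ^+ 2)) -> (Sq p <= k%:E * Sq p1)%E.
Proof.
move=> k0 h; rewrite /Sq -esumZ //; last by move=> i; rewrite lee_fin mulr_ge0 ?sqr_ge0.
by apply: le_esum => i _; rewrite -EFinM lee_fin.
Qed.

Lemma Sq_le2 p p1 p2 k1 k2 : 0 <= k1 -> 0 <= k2 ->
  (forall i, c i * p i ^+ 2 <= k1 * (c i * p1 i ^+ 2) + k2 * (c i * p2 i ^+ 2)) ->
  (Sq p <= k1%:E * Sq p1 + k2%:E * Sq p2)%E.
Proof.
move=> k10 k20 h; rewrite /Sq.
have g : forall i (q : I -> R), (0 <= (c i * q i ^+ 2)%:E)%E.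
  by move=> i q; rewrite lee_fin mulr_ge0 ?sqr_ge0.
rewrite -!esumZ // -esumD; first last.
- by move=> i _; rewrite mule_ge0 // lee_fin.
- by move=> i _; rewrite mule_ge0 // lee_fin.
by apply: le_esum => i _; rewrite -!EFinM -EFinD lee_fin.
Qed.

Lemma termwise (F : set I) (x : I) (a b pv qv eta : R) : 0 < eta ->
  c x * (a * pv + b * qv) ^+ 2 <=
  (1 + eta) * a ^+ 2 * (c x * pv ^+ 2) +
  eta^-1 * a ^+ 2 * (if x \in ~` F then c x * pv ^+ 2 else 0) +
  (1 + eta) * b ^+ 2 * (c x * qv ^+ 2) +
  (1 + eta^-1) * b ^+ 2 * (if x \in F then c x * qv ^+ 2 else 0).
Proof.
move=> e0; have ie0 : 0 < eta^-1 by rewrite invr_gt0.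
have cx := c0 x.
rewrite in_setC; case: (boolP (x \in F)) => hx /=.
- have h := core_ineq (a * pv) (b * qv) e0.
  apply: le_trans (ler_wpM2l cx h) _.
  rewrite -subr_ge0.
  have -> : (1 + eta) * a ^+ 2 * (c x * pv ^+ 2) + eta^-1 * a ^+ 2 * 0 +
    (1 + eta) * b ^+ 2 * (c x * qv ^+ 2) + (1 + eta^-1) * b ^+ 2 * (c x * qv ^+ 2) -
    c x * ((1 + eta) * (a * pv) ^+ 2 + (1 + eta^-1) * (b * qv) ^+ 2) =
    (1 + eta) * (c x * (b * qv) ^+ 2) by ring.
  by apply: mulr_ge0; [rewrite addr_ge0 // ltW | rewrite mulr_ge0 ?sqr_ge0].
- have h := core_ineq (b * qv) (a * pv) e0.
  rewrite addrC in h.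
  apply: le_trans (ler_wpM2l cx h) _.
  rewrite -subr_ge0.
  have -> : (1 + eta) * a ^+ 2 * (c x * pv ^+ 2) + eta^-1 * a ^+ 2 * (c x * pv ^+ 2) +
    (1 + eta) * b ^+ 2 * (c x * qv ^+ 2) + (1 + eta^-1) * b ^+ 2 * 0 -
    c x * ((1 + eta) * (b * qv) ^+ 2 + (1 + eta^-1) * (a * pv) ^+ 2) =
    eta * (c x * (a * pv) ^+ 2) by ring.
  by apply: mulr_ge0; [rewrite ltW | rewrite mulr_ge0 ?sqr_ge0].
Qed.

Lemma lemA (p : I -> R) (q : nat -> I -> R) (P K a b eps : R) :
  Sq p = P%:E -> (\forall n \near \oo, (Sq (q n) <= K%:E)%E) ->
  (forall i, (fun n => q n i) @ \oo --> (0:R)) -> 0 < eps ->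
  \forall n \near \oo,
    (Sq (fun i => (a * p i + b * q n i)%R) <= ((a ^+ 2 * P + b ^+ 2 * K + eps)%R)%:E)%E.
Proof.
move=> hP hK hq eps0.
have P0 : 0 <= P by rewrite -lee_fin -hP Sq_ge0.
have K0 : 0 <= K.
  have [n0 hn0] := filter_ex hK.
  by rewrite -lee_fin (le_trans (Sq_ge0 (q n0))).
set M := a ^+ 2 * P + b ^+ 2 * K.
have M0 : 0 <= M by rewrite addr_ge0 // mulr_ge0 ?sqr_ge0.
set eta := eps / (3 * (M + 1)).
have M1 : 0 < 3 * (M + 1) by lra.
have eta0 : 0 < eta by rewrite divr_gt0.
set tau := eta * eps / (3 * (a ^+ 2 + 1)).
have a2 : 0 <= a ^+ 2 by rewrite sqr_ge0.
have A1 : 0 < 3 * (a ^+ 2 + 1) by lra.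
have tau0 : 0 < tau by rewrite /tau; apply: divr_gt0 => //; apply: mulr_gt0.
have [F finF hF] := @esum_tail R I (fun i => c i * p i ^+ 2) P tau
  (fun i => mulr_ge0 (c0 i) (sqr_ge0 _)) hP tau0.
set s : seq I := fset_set F.
have hs : (fun n => \sum_(i <- s) c i * q n i ^+ 2) @ \oo --> (0:R).
  apply: cvg_sum0 => i.
  have h := cvgM (cvg_cst (c i)) (cvgM (hq i) (hq i)).
  rewrite !mulr0 in h.
  rewrite (_ : (fun n => c i * q n i ^+ 2) = (fun=> c i) \* (q^~ i \* q^~ i)).
    exact: h.
  by apply/funext => n /=; rewrite expr2.
set delta := eps / 3 / ((1 + eta^-1) * b ^+ 2 + 1).
have delta0 : 0 < delta.
  have ie : 0 <= eta^-1 by rewrite invr_ge0 ltW.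
  have : 0 <= (1 + eta^-1) * b ^+ 2 by rewrite mulr_ge0 ?sqr_ge0 //; lra.
  move=> h; rewrite !divr_gt0 //; lra.
move/cvgr0Pnorm_le : hs => /(_ delta delta0) hs.
near=> n.
have hSF : `|\sum_(i <- s) c i * q n i ^+ 2| <= delta by near: n.
have [kn [kn0 knK hkn]] : exists kn, [/\ 0 <= kn, kn <= K & Sq (q n) = kn%:E].
  have h1 := Sq_ge0 (q n); have h2 : (Sq (q n) <= K%:E)%E by near: n.
  have e := fin_bounds h1 h2.
  exists (fine (Sq (q n))); split => //; by rewrite -lee_fin -e.
have [t [t0 tT ht]] : exists t, [/\ 0 <= t, t <= tau &
    (\esum_(i in ~` F) (c i * p i ^+ 2)%:E = t%:E)%E].
  have h1 : (0 <= \esum_(i in ~` F) (c i * p i ^+ 2)%:E)%E.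
    by apply: esum_ge0 => i _; rewrite lee_fin mulr_ge0 ?sqr_ge0.
  have e := fin_bounds h1 hF.
  exists (fine (\esum_(i in ~` F) (c i * p i ^+ 2)%:E)); split => //; by rewrite -lee_fin -e.
set SF := \sum_(i <- s) c i * q n i ^+ 2.
have SF0 : 0 <= SF by apply: sumr_ge0 => i _; rewrite mulr_ge0 ?sqr_ge0.
have E2 : \esum_(i in [set: I]) (if i \in F then c i * q n i ^+ 2 else 0)%:E = SF%:E.
  transitivity (\esum_(i in F) (c i * q n i ^+ 2)%:E).
    by rewrite [RHS]esum_mkcond; apply: eq_esum => i _; case: ifP.
  rewrite esum_fset //; last by move=> i _; rewrite lee_fin mulr_ge0 ?sqr_ge0.
  by rewrite fsbig_finite // sumEFin.
have E1 : \esum_(i in [set: I]) (if i \in ~` F then c i * p i ^+ 2 else 0)%:E = t%:E.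
  by rewrite -ht [RHS]esum_mkcond; apply: eq_esum => i _; case: ifP.
have ie0 : 0 < eta^-1 by rewrite invr_gt0.
have b2 : 0 <= b ^+ 2 by rewrite sqr_ge0.
rewrite /Sq.
apply: le_trans (le_esum (I:=[set: I]) (b := fun i => ((1 + eta) * a ^+ 2 * (c i * p i ^+ 2) + eta^-1 * a ^+ 2 * (if i \in ~` F then c i * p i ^+ 2 else 0) + (1 + eta) * b ^+ 2 * (c i * q n i ^+ 2) + (1 + eta^-1) * b ^+ 2 * (if i \in F then c i * q n i ^+ 2 else 0))%:E) _) _.
  by move=> i _; rewrite lee_fin; exact: termwise.
rewrite esum4; first last.
- by move=> x; case: ifP => _ //; rewrite mulr_ge0 ?sqr_ge0.
- by move=> x; rewrite mulr_ge0 ?sqr_ge0.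
- by move=> x; case: ifP => _ //; rewrite mulr_ge0 ?sqr_ge0.
- by move=> x; rewrite mulr_ge0 ?sqr_ge0.
- by rewrite mulr_ge0 //; lra.
- by rewrite mulr_ge0 //; lra.
- by rewrite mulr_ge0 //; lra.
- by rewrite mulr_ge0 //; lra.
rewrite E1 E2 -/(Sq p) -/(Sq (q n)) hP hkn.
rewrite -!EFinM -!EFinD lee_fin.
have bk : b ^+ 2 * kn <= b ^+ 2 * K by rewrite ler_wpM2l.
have h1 : eta * (a ^+ 2 * P + b ^+ 2 * kn) <= eps / 3.
  have e : eta * (M + 1) = eps / 3.
    rewrite /eta; field; do ?[apply/andP; split]; nz.
  rewrite -e ler_wpM2l ?ltW // /M; lra.
have h2 : eta^-1 * a ^+ 2 * t <= eps / 3.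
  apply: le_trans (_ : eta^-1 * a ^+ 2 * tau <= _).
    by rewrite ler_wpM2l // mulr_ge0 // ltW.
  have e : eta^-1 * a ^+ 2 * tau = eps / 3 * (a ^+ 2 / (a ^+ 2 + 1)).
    rewrite /tau; field; do ?[apply/andP; split]; nz.
  rewrite e ler_piMr //; first by rewrite divr_ge0 //; lra.
  rewrite ler_pdivrMr; lra.
have h3 : (1 + eta^-1) * b ^+ 2 * SF <= eps / 3.
  have X0 : 0 <= (1 + eta^-1) * b ^+ 2 by rewrite mulr_ge0 //; lra.
  have SFd : SF <= delta by apply: le_trans hSF; rewrite ger0_norm.
  apply: le_trans (_ : (1 + eta^-1) * b ^+ 2 * delta <= _).
    by rewrite ler_wpM2l.
  have e : ((1 + eta^-1) * b ^+ 2 + 1) * delta = eps / 3.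
    have eb : 0 <= (eta + 1) * b ^+ 2 by rewrite mulr_ge0 //; lra.
    rewrite /delta; field; do ?[apply/andP; split]; nz.
  rewrite -e mulrDl mul1r; lra.
have -> : (1 + eta) * a ^+ 2 * P + eta^-1 * a ^+ 2 * t + (1 + eta) * b ^+ 2 * kn +
  (1 + eta^-1) * b ^+ 2 * SF = (a ^+ 2 * P + b ^+ 2 * kn) +
  eta * (a ^+ 2 * P + b ^+ 2 * kn) + eta^-1 * a ^+ 2 * t + (1 + eta^-1) * b ^+ 2 * SF by ring.
rewrite /M; lra.
Unshelve. all: by end_near.
Qed.
End LemA.
Ltac split_ifs := repeat match goal with |- context [if ?x <= ?y then _ else _] => case: (lerP x y) => ? end.
Section Clamp.
Context {R : realType}.
Definition G (a v : R) : R :=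
  if 0 <= a then (if v <= 0 then 0 else if v <= 2 * a then v else 2 * a)
  else (if 0 <= v then 0 else if 2 * a <= v then v else 2 * a).

Lemma G_id a : G a a = a.
Proof. rewrite /G; split_ifs; lra. Qed.

Lemma G_abs1 a v : `|G a v| <= `|v|.
Proof.
have h1 := ler_norm v; have h2 := ler_norm (- v); rewrite normrN in h2.
rewrite ler_norml /G; split_ifs; apply/andP; split; lra.
Qed.

Lemma G_abs2 a v : `|G a v| <= 2 * `|a|.
Proof.
have h1 := ler_norm a; have h2 := ler_norm (- a); rewrite normrN in h2.
rewrite ler_norml /G; split_ifs; apply/andP; split; lra.
Qed.

Lemma G_lip a b v v' : `|G a v - G b v'| <= `|v - v'| + 2 * `|a - b|.
Proof.
have h1 := ler_norm (v - v'); have h2 := ler_norm (- (v - v')); rewrite normrN in h2.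
have h3 := ler_norm (a - b); have h4 := ler_norm (- (a - b)); rewrite normrN in h4.
rewrite ler_norml /G; split_ifs; apply/andP; split; lra.
Qed.

Lemma sq_norm (x : R) : `|x| ^+ 2 = x ^+ 2.
Proof. by rewrite real_normK // num_real. Qed.

Lemma G_sq1 a v : G a v ^+ 2 <= v ^+ 2.
Proof.
have h := G_abs1 a v; have h0 := normr_ge0 (G a v).
rewrite -sq_norm -(sq_norm v); nra.
Qed.

Lemma G_sq2 a v : G a v ^+ 2 <= 4 * a ^+ 2.
Proof.
have h := G_abs2 a v; have h0 := normr_ge0 (G a v).
rewrite -sq_norm -(sq_norm a); nra.
Qed.

Lemma G_sq3 a b v v' : (G a v - G b v') ^+ 2 <= 2 * (v - v') ^+ 2 + 8 * (a - b) ^+ 2.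
Proof.
have h := G_lip a b v v'; have h0 := normr_ge0 (G a v - G b v').
have h1 := normr_ge0 (v - v'); have h2 := normr_ge0 (a - b).
rewrite -sq_norm -(sq_norm (v - v')) -(sq_norm (a - b)).
have hm := ler_pM h0 h0 h h.
have hs := sqr_ge0 (`|v - v'| - 2 * `|a - b|).
rewrite !expr2 in hs *; nra.
Qed.
End Clamp.
Section Graph.
Context {R : realType} {V : countType} (w : V -> V -> R) (mu : V -> R).

Definition cE : V * V -> R := fun pr => w pr.1 pr.2.
Definition dE (f : V -> R) : V * V -> R := fun pr => f pr.1 - f pr.2.
Definition ES (f : V -> R) := Sq cE (dE f).
Definition EP (Pot : V -> R) (f : V -> R) := Sq (fun x => Pot x * mu x) f.
Definition EM (f : V -> R) := Sq mu f.

Lemma energy_eq Pot f :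
  energy w mu Pot f = ((2%:R^-1)%:E * (ES f + EP Pot f))%E.
Proof.
rewrite /energy /ES /EP /Sq /cE /dE; congr (_ * (_ + _))%E.
by apply: eq_esum => x _; congr EFin; rewrite mulrAC.
Qed.

Lemma L2_eq f : L2norm2 mu f = EM f.
Proof. by rewrite /L2norm2 /EM /Sq; apply: eq_esum => x _; rewrite mulrC. Qed.

Lemma in_L2P_eq Pot f : L2norm2 (fun x => Pot x * mu x) f = EP Pot f.
Proof. by rewrite /L2norm2 /EP /Sq; apply: eq_esum => x _; rewrite mulrC. Qed.

Lemma form_eq Pot f :
  form_norm2 w mu Pot f = ((2%:R^-1)%:E * (ES f + EP Pot f) + EM f)%E.
Proof. by rewrite /form_norm2 energy_eq L2_eq. Qed.

Lemma EP0 f : EP (fun _ => 0) f = 0%E.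
Proof. by rewrite /EP /Sq; apply: esum1 => x _; rewrite mul0r mul0r. Qed.
End Graph.
Section EHelp.
Context {R : realType}.
Local Open Scope ereal_scope.

Lemma fin_le (A : \bar R) (r : R) : 0 <= A -> A <= r%:E -> A = (fine A)%:E.
Proof. by move=> h0 h1; rewrite fineK // ge0_fin_numE // (le_lt_trans h1) // ltry. Qed.

Lemma half_bound (S : \bar R) : 0 <= S -> S <= 2%:E * ((2%:R^-1)%:E * S).
Proof.
by move=> S0; rewrite muleA -EFinM mulfV ?mul1e.
Qed.

Lemma dec3 (A B C : \bar R) (r : R) : 0 <= A -> 0 <= B -> 0 <= C ->
  (2%:R^-1)%:E * (A + B) + C <= r%:E ->
  exists a b c : R, [/\ A = a%:E, B = b%:E, C = c%:E,
    [/\ (0 <= a)%R, (0 <= b)%R & (0 <= c)%R] & (2%:R^-1 * (a + b) + c <= r)%R].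
Proof.
move=> A0 B0 C0 h.
have h2 : 0 <= (2%:R^-1)%:E * (A + B) by rewrite mule_ge0 // ?adde_ge0 // lee_fin invr_ge0.
have hC : C <= r%:E by apply: le_trans h; rewrite leeDr.
have hAB : (2%:R^-1)%:E * (A + B) <= r%:E by apply: le_trans h; rewrite leeDl.
have hS : A + B <= (2 * r)%:E.
  apply: le_trans (half_bound (adde_ge0 A0 B0)) _.
  by rewrite EFinM lee_wpmul2l // lee_fin.
have hA : A <= (2 * r)%:E by apply: le_trans hS; rewrite leeDl.
have hB : B <= (2 * r)%:E by apply: le_trans hS; rewrite leeDr.
rewrite (fin_le A0 hA) (fin_le B0 hB) (fin_le C0 hC) in h *.
exists (fine A), (fine B), (fine C); split => //.
by split; apply: fine_ge0.
Qed.
End EHelp.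
Section Back.
Context {R : realType} {V : countType} (w : V -> V -> R) (mu Pot : V -> R).
Hypotheses (w0 : forall x y, 0 <= w x y) (mu0 : forall x, 0 < mu x)
  (Pot0 : forall x, 0 <= Pot x).

Let cE0 : forall i, 0 <= cE w i. Proof. by move=> [x y]; exact: w0. Qed.
Let cP0 : forall x, 0 <= Pot x * mu x.
Proof. by move=> x; rewrite mulr_ge0 // ltW. Qed.
Let mu0' : forall x, 0 <= mu x. Proof. by move=> x; rewrite ltW. Qed.

Lemma cvge0_ev (x : nat -> \bar R) (d : R) : x @ \oo --> 0%:E -> 0 < d ->
  \forall n \near \oo, (x n <= d%:E)%E.
Proof.
move=> /fine_cvgP [hfin hc] d0.
move/cvgr0Pnorm_le : hc => /(_ d d0) hc.
near=> n.
have f : x n \is a fin_num by near: n.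
have b : `|fine (x n)| <= d by near: n.
rewrite -(fineK f) lee_fin; exact: le_trans (ler_norm _) b.
Unshelve. all: by end_near.
Qed.

Variables (u : V -> R) (phi : nat -> V -> R).
Hypotheses (hCc : forall n, Cc (phi n))
  (hcvg : (fun n => form_norm2 w mu (fun _ => 0) (u \- phi n)) @ \oo --> 0%:E).
Variables (Su Pu : R).
Hypotheses (hSu : ES w u = Su%:E) (hPu : EP mu Pot u = Pu%:E).

Let e n : V -> R := u \- phi n.
Let g n x := G (u x) (e n x).
Let psi n x := u x - g n x.

Lemma psi_Cc n : Cc (psi n).
Proof.
apply: sub_finite_set (hCc n) => x /=; apply: contra_neq => h.
by rewrite /psi /g /e /= h subr0 G_id subrr.
Qed.

Lemma ev_small d : 0 < d -> \forall n \near \oo,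
  (ES w (e n) <= (2 * d)%:E)%E /\ (EM mu (e n) <= d%:E)%E.
Proof.
move=> d0; have := cvge0_ev hcvg d0; apply: filterS => n.
rewrite form_eq EP0 => h.
have [a [b [c [hA hB hC [a0 b0 c0] hh]]]] := dec3 (Sq_ge0 cE0 _) (lexx 0%E) (Sq_ge0 mu0' _) h.
rewrite /ES /EM hA hC !lee_fin; split; lra.
Qed.

Lemma g_cvg x : (fun n => g n x) @ \oo --> (0:R).
Proof.
apply/cvgr0Pnorm_le => eps eps0.
have d0 : 0 < mu x * eps ^+ 2 by rewrite mulr_gt0 // exprn_gt0.
have := ev_small d0; apply: filterS => n [_ h].
have t := @term_le_Sq R V mu (e n) x.
have h2 := le_trans t h; rewrite lee_fin in h2.
have h3 : e n x ^+ 2 <= eps ^+ 2 by rewrite -(ler_pM2l (mu0 x)).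
have h4 : `|e n x| <= eps.
  have := normr_ge0 (e n x); rewrite -sq_norm in h3; nra.
exact: le_trans (G_abs1 _ _) h4.
Qed.

Lemma K_S : \forall n \near \oo, (ES w (g n) <= (4 + 8 * Su)%:E)%E.
Proof.
have := ev_small (ltr01 : (0:R) < 1); apply: filterS => n [h _].
apply: le_trans (Sq_le2 cE0 (p1 := dE (e n)) (p2 := dE u) (k1 := 2) (k2 := 8) _ _ _) _ => //.
  move=> [x y] /=; rewrite /dE /cE /g /=.
  apply: le_trans (ler_wpM2l (w0 x y) (G_sq3 (u x) (u y) (e n x) (e n y))) _.
  by rewrite le_eqVlt; apply/orP; left; apply/eqP; ring.
rewrite -/(ES w (e n)) -/(ES w u) hSu.
have : ((2:R)%:E * ES w (e n) <= (2 * (2 * 1))%:E)%E.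
  by rewrite EFinM lee_wpmul2l // lee_fin.
move=> h2; rewrite -EFinM; apply: le_trans (leeD h2 (lexx _)) _.
by rewrite -EFinD lee_fin; lra.
Qed.

Lemma K_P n : (EP mu Pot (g n) <= (4 * Pu)%:E)%E.
Proof.
rewrite EFinM -hPu; apply: Sq_le1 => // x.
rewrite /g; apply: le_trans (ler_wpM2l (cP0 x) (G_sq2 (u x) (e n x))) _.
by rewrite le_eqVlt; apply/orP; left; apply/eqP; ring.
Qed.

Lemma K_M : \forall n \near \oo, (EM mu (g n) <= 1%:E)%E.
Proof.
have := ev_small (ltr01 : (0:R) < 1); apply: filterS => n [_ h].
apply: le_trans h; rewrite -[EM mu (e n)]mul1e; apply: Sq_le1 => // x.
rewrite /g mul1r; apply: ler_wpM2l => //; exact: G_sq1.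
Qed.

Variable Mu : R.
Hypothesis hMu : EM mu u = Mu%:E.

Lemma Q_ge0 f : (0 <= form_norm2 w mu Pot f)%E.
Proof.
rewrite form_eq; apply: adde_ge0; last exact: Sq_ge0.
apply: mule_ge0; first by rewrite lee_fin invr_ge0.
by apply: adde_ge0; apply: Sq_ge0.
Qed.

Lemma Cc0 : Cc (fun _ : V => 0 : R).
Proof. by rewrite /Cc (_ : [set x | _] = set0) //; apply/seteqP; split => x //=; rewrite eqxx. Qed.

Lemma Cc_comb (f1 f2 : V -> R) (a b : R) : Cc f1 -> Cc f2 ->
  Cc (fun x => a * f1 x + b * f2 x).
Proof.
move=> h1 h2.
have fU : finite_set ([set x | f1 x != 0] `|` [set x | f2 x != 0]) by rewrite finite_setU.
apply: sub_finite_set fU => x /= hx.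
case: (eqVneq (f1 x) 0) => [e1|n1]; last by left.
case: (eqVneq (f2 x) 0) => [e2|n2]; last by right.
by move: hx; rewrite e1 e2 !mulr0 addr0 eqxx.
Qed.

Lemma approx (eps : R) : 0 < eps ->
  exists f, Cc f /\ (form_norm2 w mu Pot (u \- f)%R <= eps%:E)%E.
Proof.
move=> eps0.
set Q := fun f => form_norm2 w mu Pot f.
set D := [set Q (fun x => (u x - f x)%R) | f in (@Cc R V)].
set d := ereal_inf D.
have d0 : (0 <= d)%E by apply/ereal_infP => y [f _ <-]; exact: Q_ge0.
have Su0 : 0 <= Su by rewrite -lee_fin -hSu; exact: Sq_ge0.
have Pu0 : 0 <= Pu by rewrite -lee_fin -hPu; exact: Sq_ge0.
have Mu0 : 0 <= Mu by rewrite -lee_fin -hMu; exact: Sq_ge0.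
have dle : (d <= (2%:R^-1 * (Su + Pu) + Mu)%:E)%E.
  apply: ereal_inf_lbound; exists (fun _ => 0); first exact: Cc0.
  rewrite /Q (_ : (fun x => u x - 0) = u); last by apply/funext => x; rewrite subr0.
  by rewrite form_eq hSu hPu hMu.
have de := fin_le d0 dle.
set dr := fine d in de.
have dr0 : 0 <= dr by rewrite -lee_fin -de.
suff dr_eq0 : dr = 0.
  have : (d < eps%:E)%E by rewrite de dr_eq0 lte_fin.
  move=> /ereal_inf_lt [_ [f hf <-] hlt].
  by exists f; split => //; apply: ltW.
case: (eqVneq dr 0) => // dnz.
have drpos : 0 < dr by rewrite lt0r dnz dr0.
exfalso.
set KS := 4 + 8 * Su.
set KP := 4 * Pu.
set KM : R := 1.
set KK := 2^-1 * (KS + KP) + KM.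
have KK0 : 0 <= KK by rewrite /KK /KS /KP /KM; lra.
set KK' := KK + dr.
have KKpos : 0 < KK' by rewrite /KK'; lra.
set t := dr / (2 * KK').
have t0 : 0 < t by rewrite /t divr_gt0 //; lra.
have t2 : 2 * t * KK' = dr by rewrite /t; field; nz.
have drK : dr <= KK' by rewrite /KK'; lra.
have t1 : t <= 1 by nra.
set T := t * dr.
have T0 : 0 < T by rewrite /T mulr_gt0.
set delta := T / 4.
have : (d < (dr + delta)%:E)%E by rewrite de lte_fin /delta; lra.
move=> /ereal_inf_lt [_ [f hf <-] hlt].
set v := fun x => u x - f x.
rewrite /Q form_eq in hlt.
have [PS [PP [PM [hPS hPP hPM [PS0 PP0 PM0] hq]]]] :=
  dec3 (Sq_ge0 cE0 _) (Sq_ge0 cP0 _) (Sq_ge0 mu0' _) (ltW hlt).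
set a := 1 - t.
set e1 := T / 10.
have e10 : 0 < e1 by rewrite /e1; lra.
have pwE : forall i, (fun n => dE (g n) i) @ \oo --> (0:R).
  move=> [x y]; rewrite /dE /=.
  have := cvgB (g_cvg x) (g_cvg y); rewrite subr0; exact.
have HS := @lemA R _ _ cE0 (dE v) (fun n => dE (g n)) PS KS a t e1 hPS K_S pwE e10.
have KP' : \forall n \near \oo, (EP mu Pot (g n) <= KP%:E)%E by apply: nearW => n; exact: K_P.
have HP := @lemA R _ _ cP0 v g PP KP a t e1 hPP KP' g_cvg e10.
have HM := @lemA R _ _ mu0' v g PM KM a t e1 hPM K_M g_cvg e10.
have [n [h1 [h2 h3]]] := filter_ex (filterI HS (filterI HP HM)).
set f' := fun x => a * f x + t * psi n x.
have hf' : Cc f' := Cc_comb a t hf (psi_Cc n).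
have dlb : (d <= Q (fun x => (u x - f' x)%R))%E by apply: ereal_inf_lbound; exists f'.
have eS : ES w (fun x => u x - f' x) = Sq (cE w) (fun i => a * dE v i + t * dE (g n) i).
  by rewrite /ES; congr Sq; apply/funext => -[x y]; rewrite /dE /f' /psi /v /a /=; ring.
have eP : EP mu Pot (fun x => u x - f' x) = Sq (fun x => Pot x * mu x) (fun i => a * v i + t * g n i).
  by rewrite /EP; congr Sq; apply/funext => x; rewrite /f' /psi /v /a /=; ring.
have eM : EM mu (fun x => u x - f' x) = Sq mu (fun i => a * v i + t * g n i).
  by rewrite /EM; congr Sq; apply/funext => x; rewrite /f' /psi /v /a /=; ring.
have : (d <= ((2^-1 * ((a ^+ 2 * PS + t ^+ 2 * KS + e1) + (a ^+ 2 * PP + t ^+ 2 * KP + e1)) +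
    (a ^+ 2 * PM + t ^+ 2 * KM + e1)))%:E)%E.
  apply: le_trans dlb _; rewrite /Q form_eq eS eP eM.
  rewrite EFinD EFinM EFinD; apply: leeD => //.
  by apply: lee_wpmul2l; [rewrite lee_fin invr_ge0 | apply: leeD].
rewrite de lee_fin => key.
set q := 2^-1 * (PS + PP) + PM.
have q0 : 0 <= q by rewrite /q; lra.
have ekey : 2^-1 * ((a ^+ 2 * PS + t ^+ 2 * KS + e1) + (a ^+ 2 * PP + t ^+ 2 * KP + e1)) +
    (a ^+ 2 * PM + t ^+ 2 * KM + e1) = a ^+ 2 * q + t ^+ 2 * KK + 2 * e1.
  by rewrite /q /KK; field.
rewrite ekey in key.
have a0 : 0 <= a by rewrite /a; lra.
have a1 : a <= 1 by rewrite /a; lra.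
have ha2 : a ^+ 2 <= 1 by rewrite expr2; nra.
have d0' : 0 <= delta by rewrite /delta; lra.
have haq : a ^+ 2 * q <= a ^+ 2 * dr + a ^+ 2 * delta.
  by rewrite -mulrDr ler_wpM2l // sqr_ge0.
have had : a ^+ 2 * delta <= delta.
  by have := ler_wpM2r d0' ha2; rewrite mul1r.
have ea : a ^+ 2 * dr = dr - 2 * T + t ^+ 2 * dr by rewrite /a /T; ring.
have etK : t ^+ 2 * KK = t ^+ 2 * KK' - t ^+ 2 * dr by rewrite /KK'; ring.
have etK' : t ^+ 2 * KK' = T / 2.
  have -> : t ^+ 2 * KK' = t * (2 * t * KK') / 2 by field.
  by rewrite t2.
rewrite /delta /e1 in d0' had haq key.
lra.
Qed.
End Back.
Lemma fin_lt {R : realType} (A : \bar R) : (0 <= A)%E -> (A < +oo)%E -> A = (fine A)%:E.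
Proof. by move=> h0 h1; rewrite fineK // ge0_fin_numE. Qed.

Unset Implicit Arguments.
Theorem lemma2p2 (R : realType) (V : countType) (w : V -> V -> R) (mu : V -> R)
    (Pot : V -> R) :
  simple_weighted_graph w mu ->
  (forall x, 0 <= Pot x) ->
  forall u : V -> R,
    formF w mu Pot u <-> (formF w mu (fun _ => 0) u /\ in_L2 (fun x => Pot x * mu x) u).
Proof.
move=> [_ [_ [w0 [mu0 _]]]] Pot0 u.
have cE0 : forall i, 0 <= cE w i by move=> [x y]; exact: w0.
have cP0 : forall x, 0 <= Pot x * mu x by move=> x; rewrite mulr_ge0 // ltW.
have mu0' : forall x, 0 <= mu x by move=> x; rewrite ltW.
have Z0 : forall x : V, 0 <= (fun _ => 0 : R) x by [].
have h2 : (0 <= (2%:R^-1 : R)%:E)%E by rewrite lee_fin invr_ge0.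
split.
- move=> [hL2 [hE [phi [hCc hcvg]]]].
  have hE' := hE; rewrite energy_eq in hE'.
  have e0 : (0 <= (2%:R^-1)%:E * (ES w u + EP mu Pot u))%E.
    by rewrite mule_ge0 // adde_ge0 //; apply: Sq_ge0.
  have fe := fin_lt e0 hE'.
  have fe' : ((2%:R^-1)%:E * (ES w u + EP mu Pot u) + 0 <=
     (fine ((2%:R^-1)%:E * (ES w u + EP mu Pot u)))%:E)%E by rewrite adde0 -fe.
  have [a [b [c [hA hB _ _ _]]]] := dec3 (Sq_ge0 cE0 _) (Sq_ge0 cP0 _) (lexx 0%E) fe'.
  split; [split; [exact: hL2 | split] | ].
  + rewrite energy_eq EP0 adde0.
    apply: le_lt_trans hE; rewrite energy_eq.
    by apply: lee_wpmul2l => //; rewrite leeDl //; apply: Sq_ge0.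
  + exists phi; split => //.
    apply: (squeeze_cvge (f := fun _ => 0%E)) hcvg; last exact: cvg_cst.
    near=> n; apply/andP; split; first exact: (Q_ge0 w0 mu0 Z0).
    rewrite !form_eq EP0 adde0; apply: leeD => //.
    by apply: lee_wpmul2l => //; rewrite leeDl //; apply: Sq_ge0.
  + by rewrite /in_L2 in_L2P_eq /EP hB ltry.
- move=> [[hL2 [hE0 [phi [hCc hcvg]]]] hP].
  rewrite /in_L2 L2_eq in hL2.
  have hMu := fin_lt (Sq_ge0 mu0' _) hL2.
  rewrite /in_L2 in_L2P_eq in hP.
  have hPu := fin_lt (Sq_ge0 cP0 _) hP.
  have hE0' := hE0; rewrite energy_eq EP0 in hE0'.
  have e0 : (0 <= (2%:R^-1)%:E * (ES w u + 0))%E.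
    by rewrite mule_ge0 // adde_ge0 //; apply: Sq_ge0.
  have fe := fin_lt e0 hE0'.
  have fe' : ((2%:R^-1)%:E * (ES w u + 0) + 0 <=
     (fine ((2%:R^-1)%:E * (ES w u + 0)))%:E)%E by rewrite adde0 -fe.
  have [a [b [c [hA _ _ _ _]]]] := dec3 (Sq_ge0 cE0 _) (lexx 0%E) (lexx 0%E) fe'.
  split; first by rewrite /in_L2 L2_eq.
  split; first by rewrite energy_eq /ES hA /EP hPu -EFinD -EFinM ltry.
  have hk : forall k : nat, exists f, Cc f /\
      (form_norm2 w mu Pot (u \- f)%R <= (harmonic k)%:E)%E.
    by move=> k; apply: (approx w0 mu0 Pot0 hCc hcvg hA hPu hMu); exact: harmonic_gt0.
  have [Phi hPhi] := choice hk.
  exists Phi; split; first by move=> k; exact: (hPhi k).1.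
  apply: (squeeze_cvge (f := fun _ => 0%E) (h := EFin \o harmonic)); last 2 first.
  + exact: cvg_cst.
  + exact: cvge_harmonic.
  near=> k; apply/andP; split; first exact: (Q_ge0 w0 mu0 Pot0).
  exact: (hPhi k).2.
Unshelve. all: by end_near.
Qed.
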